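(* In the setting where $\alpha\in(0,1)$ satisfies $\frac{1-\alpha}{1+\alpha}<\alpha^{1/2}$ and two boxes are given by $w_k=W_0/\alpha^{i+i_k}$, $h_k=H_0/\alpha^{j+j_k}$, $x_k=b_x\delta_i+(m+m_k)\delta_i$, $y_k=b_y\delta_j+(n+n_k)\delta_j$ ($k=1,2$) with $\delta_i=\frac{W_0}{\alpha^{i}}\frac{1-\alpha}{1+\alpha}$, $\delta_j=\frac{H_0}{\alpha^{j}}\frac{1-\alpha}{1+\alpha}$ and all offsets $i_k,j_k,m_k,n_k\in[-\tfrac12,\tfrac12]$: if all variables other than $i_1$ are held fixed, then the minimum of the IoU of the two boxes over $i_1\in[-\tfrac12,\tfrac12]$ is attained at $i_1=-\tfrac12$ or $i_1=\tfrac12$. *)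

(* Defs.v *)
From Stdlib Require Import Reals ZArith.
Open Scope R_scope.

Definition overlap (c1 l1 c2 l2 : R) : R :=
  Rmax 0 (Rmin (c1 + l1 / 2) (c2 + l2 / 2) - Rmax (c1 - l1 / 2) (c2 - l2 / 2)).

Definition iou (x1 y1 w1 h1 x2 y2 w2 h2 : R) : R :=
  let I := overlap x1 w1 x2 w2 * overlap y1 h1 y2 h2 in
  I / (w1 * h1 + w2 * h2 - I).

Definition side (L0 alpha e : R) : R := L0 / Rpower alpha e.

Definition step (L0 alpha i : R) : R :=
  L0 / Rpower alpha i * ((1 - alpha) / (1 + alpha)).

Definition box_pair_iou (alpha W0 H0 bx by_ : R) (i j m n : Z)
    (i1 j1 m1 n1 i2 j2 m2 n2 : R) : R :=
  let di := step W0 alpha (IZR i) in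
  let dj := step H0 alpha (IZR j) in
  iou (bx * di + (IZR m + m1) * di) (by_ * dj + (IZR n + n1) * dj)
      (side W0 alpha (IZR i + i1)) (side H0 alpha (IZR j + j1))
      (bx * di + (IZR m + m2) * di) (by_ * dj + (IZR n + n2) * dj)
      (side W0 alpha (IZR i + i2)) (side H0 alpha (IZR j + j2)).

Definition in_half (t : R) : Prop := -(1/2) <= t <= 1/2.

(* Main.v *)
Require Import Defs.
From Stdlib Require Import Reals ZArith Lra Psatz.
Open Scope R_scope.

Lemma min_conc (c U w1 w w2 : R) : w1 <= w <= w2 ->
  (w2 - w) * Rmin (c + w1/2) U + (w - w1) * Rmin (c + w2/2) U
  <= (w2 - w1) * Rmin (c + w/2) U.
Proof.
  intros H. unfold Rmin.
  destruct (Rle_dec (c + w1/2) U); destruct (Rle_dec (c + w2/2) U);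
  destruct (Rle_dec (c + w/2) U); nra.
Qed.

Lemma max_conv (c L w1 w w2 : R) : w1 <= w <= w2 ->
  (w2 - w1) * Rmax (c - w/2) L <=
  (w2 - w) * Rmax (c - w1/2) L + (w - w1) * Rmax (c - w2/2) L.
Proof.
  intros H. unfold Rmax.
  destruct (Rle_dec (c - w1/2) L); destruct (Rle_dec (c - w2/2) L);
  destruct (Rle_dec (c - w/2) L); nra.
Qed.

Definition gg c v c2 l2 := Rmin (c + v / 2) (c2 + l2 / 2) - Rmax (c - v / 2) (c2 - l2 / 2).

Lemma g_conc c c2 l2 w1 w w2 : w1 <= w <= w2 ->
  (w2 - w) * gg c w1 c2 l2 + (w - w1) * gg c w2 c2 l2 <= (w2 - w1) * gg c w c2 l2.
Proof.
  intros H. unfold gg.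
  pose proof (min_conc c (c2 + l2/2) w1 w w2 H).
  pose proof (max_conv c (c2 - l2/2) w1 w w2 H). nra.
Qed.

Lemma ov_eq c v c2 l2 : overlap c v c2 l2 = Rmax 0 (gg c v c2 l2).
Proof. reflexivity. Qed.

Lemma ov_bounds c v c2 l2 : 0 < v -> 0 <= overlap c v c2 l2 <= v.
Proof.
  intros Hv. unfold overlap. split. apply Rmax_l.
  apply Rmax_lub. lra.
  pose proof (Rmin_l (c + v/2) (c2 + l2/2)). pose proof (Rmax_l (c - v/2) (c2 - l2/2)). lra.
Qed.

Definition FF c c2 l2 K h A2 v :=
  (overlap c v c2 l2 * K) / (v * h + A2 - overlap c v c2 l2 * K).

Lemma den_pos c c2 l2 K h A2 v : 0 < h -> 0 <= K <= h -> 0 < A2 -> 0 < v ->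
  0 < v * h + A2 - overlap c v c2 l2 * K.
Proof.
  intros. pose proof (ov_bounds c v c2 l2 H2). nra.
Qed.

Lemma key c c2 l2 K h A2 w1 w w2 : 0 < h -> 0 <= K <= h -> 0 < A2 -> 0 < w1 ->
  w1 <= w <= w2 ->
  Rmin (FF c c2 l2 K h A2 w1) (FF c c2 l2 K h A2 w2) <= FF c c2 l2 K h A2 w.
Proof.
  intros Hh HK HA Hw1 Hw.
  assert (Hw0 : 0 < w) by lra. assert (Hw2 : 0 < w2) by lra.
  set (t := Rmin _ _).
  pose proof (den_pos c c2 l2 K h A2 w Hh HK HA Hw0) as D.
  pose proof (den_pos c c2 l2 K h A2 w1 Hh HK HA Hw1) as D1.
  pose proof (den_pos c c2 l2 K h A2 w2 Hh HK HA Hw2) as D2.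
  pose proof (ov_bounds c w c2 l2 Hw0) as O.
  pose proof (ov_bounds c w1 c2 l2 Hw1) as O1.
  pose proof (ov_bounds c w2 c2 l2 Hw2) as O2.
  unfold FF in *.
  destruct (Rle_dec t 0) as [Ht|Ht].
  - apply Rle_trans with 0; [exact Ht|].
    apply Rmult_le_pos; [nra| left; apply Rinv_0_lt_compat; exact D].
  - apply Rnot_le_lt in Ht.
    assert (T1 : t <= overlap c w1 c2 l2 * K / (w1 * h + A2 - overlap c w1 c2 l2 * K)) by apply Rmin_l.
    assert (T2 : t <= overlap c w2 c2 l2 * K / (w2 * h + A2 - overlap c w2 c2 l2 * K)) by apply Rmin_r.
    set (D1' := w1 * h + A2 - overlap c w1 c2 l2 * K) in *.
    set (D2' := w2 * h + A2 - overlap c w2 c2 l2 * K) in *.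
    set (D' := w * h + A2 - overlap c w c2 l2 * K) in *.
    assert (E1 : t * D1' <= overlap c w1 c2 l2 * K).
    { apply Rmult_le_compat_r with (r := D1') in T1; [|lra].
      unfold Rdiv in T1. rewrite Rmult_assoc, Rinv_l in T1 by lra. lra. }
    assert (E2 : t * D2' <= overlap c w2 c2 l2 * K).
    { apply Rmult_le_compat_r with (r := D2') in T2; [|lra].
      unfold Rdiv in T2. rewrite Rmult_assoc, Rinv_l in T2 by lra. lra. }
    assert (P1 : 0 < overlap c w1 c2 l2 * K) by nra.
    assert (P2 : 0 < overlap c w2 c2 l2 * K) by nra.
    assert (G1 : overlap c w1 c2 l2 = gg c w1 c2 l2).
    { rewrite ov_eq in *. unfold Rmax in *. destruct (Rle_dec 0 (gg c w1 c2 l2)); nra. }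
    assert (G2 : overlap c w2 c2 l2 = gg c w2 c2 l2).
    { rewrite ov_eq in *. unfold Rmax in *. destruct (Rle_dec 0 (gg c w2 c2 l2)); nra. }
    assert (G : gg c w c2 l2 <= overlap c w c2 l2) by (rewrite ov_eq; apply Rmax_r).
    pose proof (g_conc c c2 l2 w1 w w2 Hw) as C.
    assert (M : t * D' <= overlap c w c2 l2 * K).
    { destruct (Req_dec w1 w2) as [Eq|Ne].
      - assert (w = w1) by lra. subst w w2. unfold D'. unfold D1' in E1. lra.
      - assert (Hlt : 0 < w2 - w1) by lra.
        unfold D', D1', D2' in *.
        rewrite G1 in E1. rewrite G2 in E2.
        set (o := overlap c w c2 l2) in *.
        set (g := gg c w c2 l2) in *.
        set (g1 := gg c w1 c2 l2) in *.
        set (g2 := gg c w2 c2 l2) in *.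
        assert (S : (w2 - w1) * (t * (w * h + A2) - (1 + t) * (g * K)) <= 0).
        { assert (A : (w2 - w) * (t * (w1 * h + A2) - (1+t) * (g1 * K)) + (w - w1) * (t * (w2 * h + A2) - (1+t) * (g2*K)) <= 0) by nra.
          assert (B : (1+t) * K * ((w2 - w) * g1 + (w - w1) * g2) <= (1+t) * K * ((w2 - w1) * g)).
          { apply Rmult_le_compat_l; [nra| exact C]. }
          nra. }
        assert (t * (w * h + A2) - (1 + t) * (g * K) <= 0).
        { destruct (Rle_dec (t * (w * h + A2) - (1 + t) * (g * K)) 0); [assumption| nra]. }
        assert ((1+t) * (g * K) <= (1+t) * (o * K)).
        { apply Rmult_le_compat_l; [lra|]. apply Rmult_le_compat_r; lra. }
        nra. }
    unfold Rdiv. apply Rmult_le_reg_r with D'; [exact D|].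
    rewrite Rmult_assoc, Rinv_l by lra. lra.
Qed.

Lemma side_pos L0 a e : 0 < L0 -> 0 < a -> 0 < side L0 a e.
Proof. intros. unfold side, Rpower. apply Rdiv_lt_0_compat; [lra| apply exp_pos]. Qed.

Lemma side_mono L0 a e e' : 0 < L0 -> 0 < a < 1 -> e <= e' -> side L0 a e <= side L0 a e'.
Proof.
  intros HL Ha He. unfold side, Rpower.
  assert (ln a < 0) by (rewrite <- ln_1; apply ln_increasing; lra).
  assert (exp (e' * ln a) <= exp (e * ln a)).
  { destruct (Req_dec e e') as [->|]; [lra|]. left. apply exp_increasing. nra. }
  pose proof (exp_pos (e' * ln a)). pose proof (exp_pos (e * ln a)).
  unfold Rdiv. apply Rmult_le_compat_l; [lra|]. apply Rinv_le_contravar; lra.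
Qed.

Theorem lemma2 (alpha W0 H0 bx by_ : R) (i j m n : Z)
    (j1 m1 n1 i2 j2 m2 n2 : R) :
  0 < alpha < 1 ->
  (1 - alpha) / (1 + alpha) < sqrt alpha ->
  0 < W0 -> 0 < H0 ->
  in_half j1 -> in_half m1 -> in_half n1 ->
  in_half i2 -> in_half j2 -> in_half m2 -> in_half n2 ->
  exists e : R, (e = -(1/2) \/ e = 1/2) /\
    forall i1 : R, in_half i1 ->
      box_pair_iou alpha W0 H0 bx by_ i j m n e j1 m1 n1 i2 j2 m2 n2
      <= box_pair_iou alpha W0 H0 bx by_ i j m n i1 j1 m1 n1 i2 j2 m2 n2.
Proof.
  intros Ha _ HW HH _ _ _ _ _ _ _.
  set (di := step W0 alpha (IZR i)). set (dj := step H0 alpha (IZR j)).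
  set (x1 := bx * di + (IZR m + m1) * di).
  set (x2 := bx * di + (IZR m + m2) * di).
  set (y1 := by_ * dj + (IZR n + n1) * dj).
  set (y2 := by_ * dj + (IZR n + n2) * dj).
  set (h1 := side H0 alpha (IZR j + j1)).
  set (h2 := side H0 alpha (IZR j + j2)).
  set (w2 := side W0 alpha (IZR i + i2)).
  set (K := overlap y1 h1 y2 h2).
  assert (Ef : forall e, box_pair_iou alpha W0 H0 bx by_ i j m n e j1 m1 n1 i2 j2 m2 n2
     = FF x1 x2 w2 K h1 (w2 * h2) (side W0 alpha (IZR i + e))) by (intros; reflexivity).
  assert (Hh1 : 0 < h1) by (apply side_pos; lra).
  assert (Hh2 : 0 < h2) by (apply side_pos; lra).
  assert (Hw2 : 0 < w2) by (apply side_pos; lra).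
  assert (HK : 0 <= K <= h1) by (apply ov_bounds; exact Hh1).
  assert (HA : 0 < w2 * h2) by nra.
  set (F := FF x1 x2 w2 K h1 (w2 * h2)).
  destruct (Rle_dec (F (side W0 alpha (IZR i + -(1/2)))) (F (side W0 alpha (IZR i + 1/2)))) as [Hc|Hc].
  - exists (-(1/2)). split; [left; reflexivity|]. intros i1 Hi1.
    rewrite !Ef. fold F.
    replace (F (side W0 alpha (IZR i + - (1 / 2)))) with
      (Rmin (F (side W0 alpha (IZR i + -(1/2)))) (F (side W0 alpha (IZR i + 1/2))))
      by (rewrite Rmin_left; lra).
    unfold F. apply key; auto. apply side_pos; lra.
    unfold in_half in Hi1. split; apply side_mono; lra.
  - exists (1/2). split; [right; reflexivity|]. intros i1 Hi1.
    rewrite !Ef. fold F.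
    replace (F (side W0 alpha (IZR i + (1 / 2)))) with
      (Rmin (F (side W0 alpha (IZR i + -(1/2)))) (F (side W0 alpha (IZR i + 1/2))))
      by (rewrite Rmin_right; lra).
    unfold F. apply key; auto. apply side_pos; lra.
    unfold in_half in Hi1. split; apply side_mono; lra.
Qed.
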